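(* Let $X$ be a set and let $\mathcal{L}$ and $\mathcal{R}$ be two dual nests on $X$. (1) If $\mathcal{L}$ satisfies (C2) and $\mathcal{R}$ satisfies (C2)*, then $\mathcal{T}_{\mathcal{L}\cup\mathcal{R}}\subseteq\mathcal{T}_{in}^{\mathcal{L}}$. (2) If $\mathcal{L}$ satisfies (C3) and $\mathcal{R}$ satisfies (C3)*, then $\mathcal{T}_{\mathcal{L}\cup\mathcal{R}}=\mathcal{T}_{in}^{\mathcal{L}}$.
   Context: A nest on $X$ is a family of subsets of $X$ totally ordered by inclusion. For a nest $\mathcal{N}$ define $x\triangleleft_{\mathcal{N}} y$ iff there exists $N\in\mathcal{N}$ with $x\in N$, $y\notin N$. Let $x\trianglelefteq_{\mathcal{L}} y$ iff $x=y$ or $x\triangleleft_{\mathcal{L}} y$. Nests $\mathcal{L},\mathcal{R}$ are dual if for all $x,y\in X$: $x\triangleleft_{\mathcal{L}} y$ iff $y\triangleleft_{\mathcal{R}} x$. Suprema and infima are taken with respect to $\trianglelefteq_{\mathcal{L}}$. (C2): every $L\in\mathcal{L}$ has a supremum $\sup L\in X-L$. (C3): for each $x\in X$ there is $L\in\mathcal{L}$ with $\sup L=x\in X-L$, and (C2) holds. (C2)*: every $R\in\mathcal{R}$ has an infimum $\inf R\in X-R$. (C3)*: for each $x\in X$ there is $R\in\mathcal{R}$ with $\inf R=x\in X-R$, and (C2)* holds. For $k\in X$ let ${\uparrow}k=\{y : k\trianglelefteq_{\mathcal{L}} y\}$ and ${\downarrow}k=\{y : y\trianglelefteq_{\mathcal{L}}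 k\}$. The lower topology $\mathcal{T}_l$ is generated by the subbase $\{X-{\uparrow}k : k\in X\}$, the upper topology $\mathcal{T}_U$ by the subbase $\{X-{\downarrow}k : k\in X\}$, and $\mathcal{T}_{in}^{\mathcal{L}}=\mathcal{T}_U\vee\mathcal{T}_l$ is the smallest topology containing both. $\mathcal{T}_{\mathcal{L}\cup\mathcal{R}}$ is the topology generated by $\mathcal{L}\cup\mathcal{R}$ as a subbase. *)

(* Defs.v *)
Section NestDefs.
Variable X : Type.

Definition subset (A B : X -> Prop) : Prop := forall x, A x -> B x.

Definition nest (N : (X -> Prop) -> Prop) : Prop :=
  forall A B, N A -> N B -> subset A B \/ subset B A.

Definition nlt (N : (X -> Prop) -> Prop) (x y : X) : Prop :=
  exists A, N A /\ A x /\ ~ A y.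

Definition nle (N : (X -> Prop) -> Prop) (x y : X) : Prop :=
  x = y \/ nlt N x y.

Definition dual (L R : (X -> Prop) -> Prop) : Prop :=
  forall x y, nlt L x y <-> nlt R y x.

Definition is_sup (L : (X -> Prop) -> Prop) (A : X -> Prop) (s : X) : Prop :=
  (forall a, A a -> nle L a s) /\
  (forall u, (forall a, A a -> nle L a u) -> nle L s u).

Definition is_inf (L : (X -> Prop) -> Prop) (A : X -> Prop) (s : X) : Prop :=
  (forall a, A a -> nle L s a) /\
  (forall u, (forall a, A a -> nle L u a) -> nle L u s).

Definition C2 (L : (X -> Prop) -> Prop) : Prop :=
  forall A, L A -> exists s, is_sup L A s /\ ~ A s.

Definition C3 (L : (X -> Prop) -> Prop) : Prop :=
  (forall x, exists A, L A /\ is_sup L A x /\ ~ A x) /\ C2 L.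

Definition C2star (L R : (X -> Prop) -> Prop) : Prop :=
  forall A, R A -> exists s, is_inf L A s /\ ~ A s.

Definition C3star (L R : (X -> Prop) -> Prop) : Prop :=
  (forall x, exists A, R A /\ is_inf L A x /\ ~ A x) /\ C2star L R.

Definition up (L : (X -> Prop) -> Prop) (k : X) : X -> Prop :=
  fun y => nle L k y.
Definition down (L : (X -> Prop) -> Prop) (k : X) : X -> Prop :=
  fun y => nle L y k.

Definition union_fam (F : (X -> Prop) -> Prop) : X -> Prop :=
  fun x => exists A, F A /\ A x.

Definition is_topology (T : (X -> Prop) -> Prop) : Prop :=
  T (fun _ => True) /\
  (forall F, (forall A, F A -> T A) -> T (union_fam F)) /\
  (forall A B, T A -> T B -> T (fun x => A x /\ B x)).

Definition generated (S : (X -> Prop) -> Prop) : (X -> Prop) -> Prop :=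
  fun U => forall T, is_topology T -> (forall A, S A -> T A) -> T U.

Definition T_lower (L : (X -> Prop) -> Prop) : (X -> Prop) -> Prop :=
  generated (fun A => exists k, A = (fun y => ~ up L k y)).

Definition T_upper (L : (X -> Prop) -> Prop) : (X -> Prop) -> Prop :=
  generated (fun A => exists k, A = (fun y => ~ down L k y)).

Definition T_in (L : (X -> Prop) -> Prop) : (X -> Prop) -> Prop :=
  generated (fun A => T_upper L A \/ T_lower L A).

Definition T_LR (L R : (X -> Prop) -> Prop) : (X -> Prop) -> Prop :=
  generated (fun A => L A \/ R A).

End NestDefs.

Arguments subset {X}.
Arguments nest {X}.
Arguments nlt {X}.
Arguments nle {X}.
Arguments dual {X}.
Arguments is_sup {X}.
Arguments is_inf {X}.
Arguments C2 {X}.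
Arguments C3 {X}.
Arguments C2star {X}.
Arguments C3star {X}.
Arguments up {X}.
Arguments down {X}.
Arguments union_fam {X}.
Arguments is_topology {X}.
Arguments generated {X}.
Arguments T_lower {X}.
Arguments T_upper {X}.
Arguments T_in {X}.
Arguments T_LR {X}.

(* Main.v *)
Require Import Defs.
From Stdlib Require Import FunctionalExtensionality PropExtensionality Classical.

Lemma gen_top {X : Type} (S : (X -> Prop) -> Prop) : is_topology (generated S).
Proof.
  split; [|split].
  - intros T hT _; exact (proj1 hT).
  - intros F hF T hT hS. apply (proj1 (proj2 hT)). intros A FA. exact (hF A FA T hT hS).
  - intros A B hA hB T hT hS. apply (proj2 (proj2 hT)); [exact (hA T hT hS)|exact (hB T hT hS)].
Qed.

Lemma gen_min {X : Type} (S T : (X -> Prop) -> Prop) :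
  is_topology T -> (forall A, S A -> T A) -> forall U, generated S U -> T U.
Proof. intros hT hS U hU; exact (hU T hT hS). Qed.

Lemma gen_sub {X : Type} (S : (X -> Prop) -> Prop) A : S A -> generated S A.
Proof. intros hA T _ hS; exact (hS A hA). Qed.

Lemma L_eq {X : Type} (L : (X -> Prop) -> Prop) A s :
  nest L -> L A -> is_sup L A s -> ~ A s -> A = fun y => ~ up L s y.
Proof.
  intros hL LA [hs1 hs2] nAs.
  apply functional_extensionality; intro y; apply propositional_extensionality.
  unfold up, nle; split.
  - intros Ay [e|[B [LB [Bs nBy]]]].
    + subst; contradiction.
    + destruct (hL B A LB LA) as [h|h]; [exact (nAs (h s Bs))|exact (nBy (h y Ay))].
  - intros h. apply NNPP; intro nAy. apply h. apply hs2.
    intros a Aa. right. exists A; auto.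
Qed.

Lemma R_eq {X : Type} (L R : (X -> Prop) -> Prop) B s :
  nest R -> dual L R -> R B -> is_inf L B s -> ~ B s -> B = fun y => ~ down L s y.
Proof.
  intros hR hd RB [hs1 hs2] nBs.
  apply functional_extensionality; intro y; apply propositional_extensionality.
  unfold down, nle; split.
  - intros By [e|h].
    + subst; contradiction.
    + apply hd in h. destruct h as [C [RC [Cs nCy]]].
      destruct (hR C B RC RB) as [h|h]; [exact (nBs (h s Cs))|exact (nCy (h y By))].
  - intros h. apply NNPP; intro nBy. apply h. apply hs2.
    intros b Bb. right. apply hd. exists B; auto.
Qed.

Theorem theorem3p3 (X : Type) (L R : (X -> Prop) -> Prop)
  (hL : nest L) (hR : nest R) (hdual : dual L R) :
  ((C2 L -> C2star L R -> forall U, T_LR L R U -> T_in L U) /\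
   (C3 L -> C3star L R -> forall U, T_LR L R U <-> T_in L U)).
Proof.
  assert (P1 : C2 L -> C2star L R -> forall U, T_LR L R U -> T_in L U).
  { intros c2 c2s. apply gen_min; [apply gen_top|].
    intros A [LA|RA].
    - destruct (c2 A LA) as [s [hs ns]].
      apply gen_sub. right. apply gen_sub. exists s. exact (L_eq L A s hL LA hs ns).
    - destruct (c2s A RA) as [s [hs ns]].
      apply gen_sub. left. apply gen_sub. exists s. exact (R_eq L R A s hR hdual RA hs ns). }
  split; [exact P1|].
  intros c3 c3s U; split; [exact (P1 (proj2 c3) (proj2 c3s) U)|].
  apply gen_min; [apply gen_top|].
  intros A [hA|hA]; revert A hA; apply gen_min; try apply gen_top.
  - intros A [k ->]. destruct (proj1 c3s k) as [B [RB [hi nB]]].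
    rewrite <- (R_eq L R B k hR hdual RB hi nB). apply gen_sub; right; exact RB.
  - intros A [k ->]. destruct (proj1 c3 k) as [B [LB [hi nB]]].
    rewrite <- (L_eq L B k hL LB hi nB). apply gen_sub; left; exact LB.
Qed.
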